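(* Let $\Phi$ be a family of spherical simplices generating the reflection group $B_n$. Then there exists a unique embedding of $\Phi$ into $B_n$, up to the action of the Weyl group of $B_n$.
   Context: A family of spherical simplices in $S^{n-1}$ is the set of $2^n$ simplices cut out by $n$ hyperplanes through the origin in $\mathbb{R}^n$ with linearly independent unit normals $f_1,\dots,f_n$; it is encoded by $\pm f_1,\dots,\pm f_n$, and it generates the group generated by the reflections in the hyperplanes $f_i^\perp$. Let $\Delta(B_n)=\{\pm h_i,\ \pm h_i\pm h_j:1\le i<j\le n\}$ ($h_1,\dots,h_n$ the standard basis of $\mathbb{R}^n$) with Weyl group $W$. An embedding of $\Phi$ into $B_n$ is a realization of $\Phi$ (by an isometry) such that the normal vectors $\pm f_1,\dots,\pm f_n$, suitably normalized, are chosen from $\Delta(B_n)$. Two embeddings are considered the same if they differ by an element of $W$. *)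

(* Defs.v *)
From HB Require Import structures.
From mathcomp Require Import all_boot all_order all_algebra.
From mathcomp Require Import reals.
Set Implicit Arguments. Unset Strict Implicit. Unset Printing Implicit Defensive.
Import Order.TTheory GRing.Theory Num.Theory.
Local Open Scope ring_scope.

Section Defs.
Variables (R : realType) (n : nat).

Definition dotv (u v : 'rV[R]_n) : R := (u *m v^T) 0 0.

(* orthogonal matrix; it acts on row vectors by v |-> v *m g *)
Definition orthogonal_mx (g : 'M[R]_n) : Prop := g *m g^T = 1%:M.

Definition refl (f : 'rV[R]_n) : 'M[R]_n :=
  1%:M - (2 / dotv f f) *: (f^T *m f).

Inductive gen_by (S : 'M[R]_n -> Prop) : 'M[R]_n -> Prop :=
| gen_one : gen_by S 1%:M
| gen_mul : forall w s, gen_by S w -> S s -> gen_by S (w *m s)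
| gen_inv : forall w, gen_by S w -> gen_by S (invmx w).

Definition hvec (i : 'I_n) : 'rV[R]_n := delta_mx 0 i.

Definition B_root (v : 'rV[R]_n) : Prop :=
  (exists i, v = hvec i \/ v = - hvec i) \/
  (exists i j : 'I_n, (i < j)%N /\
     (v = hvec i + hvec j \/ v = hvec i - hvec j \/
      v = - hvec i + hvec j \/ v = - hvec i - hvec j)).

Definition weylB (w : 'M[R]_n) : Prop :=
  gen_by (fun s => exists r, B_root r /\ s = refl r) w.

Definition refl_group (f : 'I_n -> 'rV[R]_n) (w : 'M[R]_n) : Prop :=
  gen_by (fun s => exists i, s = refl (f i)) w.

(* f_1..f_n are linearly independent unit vectors: the data of a family Phi
   of spherical simplices in S^{n-1} *)
Definition simplex_family (f : 'I_n -> 'rV[R]_n) : Prop :=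
  (forall i, dotv (f i) (f i) = 1) /\ row_free (\matrix_(i < n) f i).

(* Phi generates the reflection group B_n: its reflection group is
   orthogonally conjugate to W(B_n) *)
Definition generates_Bn (f : 'I_n -> 'rV[R]_n) : Prop :=
  exists h : 'M[R]_n, orthogonal_mx h /\
    forall M, refl_group f M <-> weylB (h^T *m M *m h).

(* an embedding of Phi into B_n: an isometry g carrying every normal f_i
   to a (normalized, i.e. positive multiple of a) root of B_n *)
Definition embedding (f : 'I_n -> 'rV[R]_n) (g : 'M[R]_n) : Prop :=
  orthogonal_mx g /\
  forall i, exists r, B_root r /\ exists c : R, 0 < c /\ f i *m g = c *: r.

Definition normals (f : 'I_n -> 'rV[R]_n) (g : 'M[R]_n) (v : 'rV[R]_n) : Prop :=
  exists i, v = f i *m g \/ v = - (f i *m g).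

(* two embeddings are the same if they differ by an element of W *)
Definition same_embedding (f : 'I_n -> 'rV[R]_n) (g g' : 'M[R]_n) : Prop :=
  exists w, weylB w /\ forall v, normals f (g *m w) v <-> normals f g' v.

End Defs.

(* Main.v *)
Require Import Defs.
From HB Require Import structures.
From mathcomp Require Import all_boot all_order all_algebra.
From mathcomp Require Import reals.
From mathcomp Require Import ring lra zify.
Set Implicit Arguments. Unset Strict Implicit. Unset Printing Implicit Defensive.
Import Order.TTheory GRing.Theory Num.Theory.
Local Open Scope ring_scope.



Section S.
Variables (R : realType) (n : nat).
Implicit Types (u v w : 'rV[R]_n) (M A B : 'M[R]_n).

Lemma hvecE (i j : 'I_n) : hvec R i 0 j = (j == i)%:R.
Proof. by rewrite /hvec mxE eqxx. Qed.

Lemma dotE u v : dotv u v = \sum_k u 0 k * v 0 k.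
Proof. by rewrite /dotv mxE; apply: eq_bigr => k _; rewrite mxE. Qed.

Lemma dotC u v : dotv u v = dotv v u.
Proof. by rewrite !dotE; apply: eq_bigr => k _; rewrite mulrC. Qed.

Lemma dotDl u v w : dotv (u + v) w = dotv u w + dotv v w.
Proof. by rewrite /dotv mulmxDl mxE. Qed.

Lemma dotZl a u w : dotv (a *: u) w = a * dotv u w.
Proof. by rewrite /dotv -scalemxAl mxE. Qed.

Lemma dotNl u w : dotv (- u) w = - dotv u w.
Proof. by rewrite -scaleN1r dotZl mulN1r. Qed.

Lemma dotBl u v w : dotv (u - v) w = dotv u w - dotv v w.
Proof. by rewrite dotDl dotNl. Qed.

Lemma dotDr u v w : dotv w (u + v) = dotv w u + dotv w v.
Proof. by rewrite dotC dotDl !(dotC w). Qed.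

Lemma dotZr a u w : dotv w (a *: u) = a * dotv w u.
Proof. by rewrite dotC dotZl dotC. Qed.

Lemma dotNr u w : dotv w (- u) = - dotv w u.
Proof. by rewrite dotC dotNl dotC. Qed.

Lemma dotBr u v w : dotv w (u - v) = dotv w u - dotv w v.
Proof. by rewrite dotDr dotNr. Qed.

Lemma doth u (i : 'I_n) : dotv u (hvec R i) = u 0 i.
Proof. by rewrite /dotv /hvec trmx_delta -colE mxE. Qed.

Lemma dothl u (i : 'I_n) : dotv (hvec R i) u = u 0 i.
Proof. by rewrite dotC doth. Qed.

Lemma dothh (i j : 'I_n) : dotv (hvec R i) (hvec R j) = (i == j)%:R.
Proof. by rewrite doth hvecE eq_sym. Qed.

Lemma dot_ge0 u : 0 <= dotv u u.
Proof. by rewrite dotE; apply: sumr_ge0 => k _; rewrite -expr2 sqr_ge0. Qed.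

Lemma dot_eq0 u : dotv u u = 0 -> u = 0.
Proof.
move=> H; apply/rowP => k; rewrite mxE.
have: u 0 k ^+ 2 <= dotv u u.
  rewrite dotE (bigD1 k) //= expr2 lerDl; apply: sumr_ge0 => j _.
  by rewrite -expr2 sqr_ge0.
rewrite H => Hk; apply/eqP; rewrite -sqrf_eq0; apply/eqP.
by apply: le_anti; rewrite Hk sqr_ge0.
Qed.

Lemma hvec_mul (i : 'I_n) M : hvec R i *m M = row i M.
Proof. by rewrite rowE. Qed.

Lemma mx_ext A B : (forall i, hvec R i *m A = hvec R i *m B) -> A = B.
Proof. by move=> H; apply/row_matrixP => i; rewrite -!hvec_mul. Qed.

Lemma vecM_entry u M k : (u *m M) 0 k = \sum_j u 0 j * M j k.
Proof. by rewrite mxE. Qed.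

Lemma hvecM_entry (i : 'I_n) M k : (hvec R i *m M) 0 k = M i k.
Proof. by rewrite hvec_mul mxE. Qed.

Lemma mx11_mul (a : 'M[R]_1) (B : 'M[R]_(1, n)) : a *m B = a 0 0 *: B.
Proof. by rewrite {1}(mx11_scalar a) mul_scalar_mx. Qed.

Lemma refl_apply u v :
  u *m refl v = u - ((2 / dotv v v) * dotv u v) *: v.
Proof.
rewrite /refl mulmxBr mulmx1 -scalemxAr mulmxA mx11_mul scalerA.
by rewrite /dotv.
Qed.

Lemma dotM u v M : M *m M^T = 1%:M -> dotv (u *m M) (v *m M) = dotv u v.
Proof. by move=> HM; rewrite /dotv trmx_mul mulmxA -(mulmxA u) HM mulmx1. Qed.

Lemma orthC M : orthogonal_mx M -> M^T *m M = 1%:M.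
Proof. by move/mulmx1C. Qed.

Lemma orth_tr M : orthogonal_mx M -> orthogonal_mx M^T.
Proof. by move=> H; rewrite /orthogonal_mx trmxK orthC. Qed.

Lemma orth_mul A B : orthogonal_mx A -> orthogonal_mx B -> orthogonal_mx (A *m B).
Proof.
by move=> HA HB; rewrite /orthogonal_mx trmx_mul mulmxA -(mulmxA A) HB mulmx1 HA.
Qed.

Lemma orth1 : orthogonal_mx (1%:M : 'M[R]_n).
Proof. by rewrite /orthogonal_mx trmx1 mulmx1. Qed.

Lemma orth_inv M : orthogonal_mx M -> invmx M = M^T.
Proof.
move=> H; have [U _] := mulmx1_unit H.
by rewrite -[RHS]mul1mx -(mulVmx U) -mulmxA H mulmx1.
Qed.

Lemma refl_invol v u : v != 0 -> u *m refl v *m refl v = u.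
Proof.
move=> v0; have d0 : dotv v v != 0 by apply/eqP => /dot_eq0 /eqP; rewrite (negPf v0).
rewrite !refl_apply dotBl dotZl.
set d := dotv v v; set a := dotv u v.
apply/rowP => k; rewrite !mxE; field; exact: d0.
Qed.

Lemma refl_tr v : (refl v)^T = refl v.
Proof. by rewrite /refl raddfB /= trmx1 linearZ /= trmx_mul trmxK. Qed.

Lemma refl_orth v : v != 0 -> orthogonal_mx (refl v).
Proof.
move=> v0; rewrite /orthogonal_mx refl_tr; apply: mx_ext => i.
by rewrite mulmxA refl_invol // mulmx1.
Qed.

Lemma reflZ c v : c != 0 -> refl (c *: v) = refl v.
Proof.
move=> c0; rewrite /refl dotZl dotZr.
have -> : (c *: v)^T = c *: v^T by apply/matrixP => i j; rewrite !mxE.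
rewrite -scalemxAl -scalemxAr !scalerA.
congr (_ - _ *: _); have [->|d0] := eqVneq (dotv v v) 0.
  by rewrite !(mulr0, invr0, mul0r).
field; by rewrite c0 d0.
Qed.

Lemma refl_conj v S : orthogonal_mx S -> S^T *m refl v *m S = refl (v *m S).
Proof.
move=> HS; rewrite /refl dotM // mulmxBr mulmxBl mulmx1 orthC //.
by rewrite -scalemxAr -scalemxAl trmx_mul !mulmxA.
Qed.

End S.



Section S2.
Variables (R : realType) (n : nat).
Implicit Types (u v w r : 'rV[R]_n) (M A B : 'M[R]_n).
Local Notation h := (@hvec R n).

Definition rowform M := forall i, exists j (s : R), (s = 1 \/ s = -1) /\ h i *m M = s *: h j.
Definition sp M := orthogonal_mx M /\ rowform M.

Lemma sp1 : sp 1%:M.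
Proof. split; first exact: orth1. by move=> i; exists i, 1; rewrite mulmx1 scale1r; split; [left|]. Qed.

Lemma sign_mul (s t : R) : (s = 1 \/ s = -1) -> (t = 1 \/ t = -1) -> (s * t = 1 \/ s * t = -1).
Proof. by case=> ->; case=> ->; rewrite ?mulN1r ?mul1r ?opprK; auto. Qed.

Lemma sp_mul A B : sp A -> sp B -> sp (A *m B).
Proof.
move=> [HA RA] [HB RB]; split; first exact: orth_mul.
move=> i; have [j [s [Hs Ej]]] := RA i; have [k [t [Ht Ek]]] := RB j.
exists k, (s * t); split; first exact: sign_mul.
by rewrite mulmxA Ej -scalemxAl Ek scalerA.
Qed.

Lemma rowform_entry M i j : rowform M -> M i j != 0 ->
  h i *m M = M i j *: h j /\ (M i j = 1 \/ M i j = -1).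
Proof.
move=> RM; have [k [s [Hs E]]] := RM i.
have Hij : M i j = s * (j == k)%:R by rewrite -(hvecM_entry i M j) E mxE hvecE.
rewrite Hij; case: (eqVneq j k) => [->|_]; last by rewrite mulr0 eqxx.
by rewrite mulr1 E.
Qed.

Lemma sp_tr A : sp A -> sp A^T.
Proof.
move=> [HA RA]; split; first exact: orth_tr.
move=> j.
have Hs : \sum_k A k j * A k j = 1.
  have := dotM (h j) (h j) (orth_tr HA); rewrite dothh eqxx mulr1n dotE => <-.
  by apply: eq_bigr => k _; rewrite !hvecM_entry !mxE.
have [i Hi] : exists i, A i j != 0.
  apply/existsP; apply: contraT; rewrite negb_exists => /forallP H0.
  have : \sum_k A k j * A k j = 0.
    by rewrite big1 // => k _; have := H0 k; rewrite negbK => /eqP ->; rewrite mul0r.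
  by rewrite Hs => /eqP; rewrite oner_eq0.
have [Ei Si] := rowform_entry RA Hi.
exists i, (A i j); split=> //.
apply/rowP => k; rewrite hvecM_entry !mxE /=.
case: (eqVneq k i) => [->|ki]; first by rewrite mulr1.
rewrite mulr0; apply/eqP; apply: contraT => Hk.
have [Ek _] := rowform_entry RA Hk.
have := dotM (h i) (h k) HA; rewrite dothh eq_sym (negPf ki) Ei Ek dotZl dotZr dothh eqxx mulr1n mulr1.
by rewrite mulr0n => /eqP; rewrite mulf_eq0 (negPf Hi) (negPf Hk).
Qed.
End S2.

Section S3.
Variables (R : realType) (n : nat).
Implicit Types (u v w r : 'rV[R]_n) (M A B : 'M[R]_n).
Local Notation h := (@hvec R n).

Lemma sp_inv A : sp A -> invmx A = A^T.
Proof. by move=> [HA _]; exact: orth_inv. Qed.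

Definition single u := exists k (x : R), x != 0 /\ u = x *: h k.
Definition rdouble u := exists k j (x y : R), k != j /\ x != 0 /\ (y = x \/ y = -x) /\
   u = x *: h k + y *: h j.
Definition RDn u := single u \/ rdouble u.
Definition RD u := exists r (c : R), B_root r /\ 0 < c /\ u = c *: r.

Lemma hZE (x : R) k t : (x *: h k) 0 t = x * (t == k)%:R.
Proof. by rewrite !mxE eqxx. Qed.

Lemma hE k t : h k 0 t = (t == k)%:R.
Proof. exact: hvecE. Qed.

Lemma refl_row_entry u i t :
  (h i *m refl u) 0 t = (t == i)%:R - 2 / dotv u u * u 0 i * u 0 t.
Proof. by rewrite refl_apply dothl !mxE eqxx. Qed.

Lemma h_neq0 k : h k != 0.
Proof. by apply/eqP => /rowP /(_ k); rewrite hE !mxE eqxx => /eqP; rewrite oner_eq0. Qed.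

Lemma single_neq0 u : single u -> u != 0.
Proof. by move=> [k [x [x0 ->]]]; rewrite scaler_eq0 negb_or x0 h_neq0. Qed.

Lemma double_neq0 u : rdouble u -> u != 0.
Proof.
move=> [k [j [x [y [kj [x0 [_ ->]]]]]]]; apply/eqP => /rowP /(_ k).
by rewrite mxE !hZE eqxx (negPf kj) mulr1n mulr0n mulr1 mulr0 addr0 => /eqP; rewrite mxE (negPf x0).
Qed.

Lemma RDn_neq0 u : RDn u -> u != 0.
Proof. by case; [apply: single_neq0 | apply: double_neq0]. Qed.

Lemma sp_refl u : RDn u -> sp (refl u).
Proof.
move=> Hu; split; first by apply: refl_orth; exact: RDn_neq0.
move=> i; case: Hu => [[k [x [x0 ->]]]|[k [j [x [y [kj [x0 [Hy ->]]]]]]]].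
- have Hd : dotv (x *: h k) (x *: h k) = x ^+ 2.
    by rewrite dotZl dotZr dothh eqxx mulr1n mulr1 expr2.
  case: (eqVneq i k) => [->|ik].
    exists k, (-1); split; first by right.
    apply/rowP => t; rewrite refl_row_entry Hd !hZE !eqxx mulr1n mulr1.
    by case: (t == k); rewrite /= ?mulr0 ?mulr1 ?mulr1n ?mulr0n ?subr0; [field|].
  exists i, 1; split; first by left.
  apply/rowP => t; rewrite refl_row_entry !hZE (negPf ik) mulr0n mulr0 mulr0 mul0r subr0.
  by rewrite mul1r.
- have Hd : dotv (x *: h k + y *: h j) (x *: h k + y *: h j) = 2 * x ^+ 2.
    rewrite !(dotDl, dotDr, dotZl, dotZr, dothh) eqxx (negPf kj) eq_sym (negPf kj).
    rewrite eqxx !(mulr1n, mulr0n, mulr0, mulr1, addr0, add0r); case: Hy => ->; ring.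
  have Ey : y ^+ 2 = x ^+ 2 by case: Hy => ->; rewrite ?sqrrN.
  have Ee : (y / x = 1 \/ y / x = -1).
    by case: Hy => ->; [left; rewrite divff | right; rewrite mulNr divff].
  have Eu t : (x *: h k + y *: h j) 0 t = x * (t == k)%:R + y * (t == j)%:R.
    by rewrite mxE !hZE.
  case: (eqVneq i k) => [->|ik].
    exists j, (- (y / x)); split; first by case: Ee => ->; rewrite ?opprK; auto.
    apply/rowP => t; rewrite refl_row_entry Hd !Eu hZE eqxx (negPf kj) mulr1 mulr0n mulr0 addr0.
    case: (eqVneq t k) => [Et|tk]; rewrite ?Et ?eqxx ?(negPf kj) ?(negPf tk) /=.
      rewrite !(mulr1n, mulr0n, mulr0, mulr1, addr0); field; exact: x0.
    case: (eqVneq t j) => [Et|tj]; rewrite ?Et ?eqxx ?(negPf tj) /=.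
      rewrite !(mulr1n, mulr0n, mulr0, mulr1, addr0, add0r, sub0r); field; exact: x0.
    by rewrite !(mulr1n, mulr0n, mulr0, mulr1, addr0, add0r, sub0r, oppr0).
  case: (eqVneq i j) => [->|ij].
    exists k, (- (y / x)); split; first by case: Ee => ->; rewrite ?opprK; auto.
    apply/rowP => t; rewrite refl_row_entry Hd !Eu hZE eqxx (eq_sym j k) (negPf kj) mulr1n mulr0n mulr0 mulr1 add0r.
    case: (eqVneq t k) => [Et|tk]; rewrite ?Et ?eqxx ?(negPf kj) ?(negPf tk) /=.
      rewrite !(mulr1n, mulr0n, mulr0, mulr1, addr0, sub0r); field; exact: x0.
    case: (eqVneq t j) => [Et|tj]; rewrite ?Et ?eqxx ?(negPf tj) /=.
      rewrite !(mulr1n, mulr0n, mulr0, mulr1, addr0, add0r, sub0r).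
      rewrite expr2 in Ey; rewrite -mulrA Ey; field; exact: x0.
    by rewrite !(mulr1n, mulr0n, mulr0, mulr1, addr0, add0r, sub0r, oppr0, subr0).
  exists i, 1; split; first by left.
  apply/rowP => t; rewrite refl_row_entry Hd !Eu (negPf ik) (negPf ij).
  by rewrite !(mulr0n, mulr0, addr0, mul0r, subr0) scale1r hE.
Qed.
End S3.

Section S4.
Variables (R : realType) (n : nat).
Implicit Types (u v w r : 'rV[R]_n) (M A B : 'M[R]_n).
Local Notation h := (@hvec R n).

Lemma neq0_entry u : u != 0 -> exists k, u 0 k != 0.
Proof.
move=> u0; apply/existsP; apply: contraT; rewrite negb_exists => /forallP H.
move: u0; apply: contraR => _; apply/eqP/rowP => k.
have := H k; rewrite negbK => /eqP ->; by rewrite mxE.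
Qed.

Lemma sp_refl_RDn u : sp (refl u) -> u != 0 -> RDn u.
Proof.
move=> [_ Ru] u0; have [k uk] := neq0_entry u0.
have d0 : dotv u u != 0 by apply: contra u0 => /eqP /dot_eq0 ->.
have [j [s [Hs E]]] := Ru k.
set c := 2 / dotv u u * u 0 k.
have c0 : c != 0 by rewrite /c !mulf_neq0 ?invr_eq0 // (@pnatr_eq0 R 2).
have Et t : u 0 t = ((t == k)%:R - s * (t == j)%:R) / c.
  have := congr1 (fun v : 'rV_n => v 0 t) E; rewrite refl_row_entry hZE -/c.
  move=> <-; field; exact: c0.
case: (eqVneq j k) => [jk|jk].
- have s1 : s != 1.
    apply: contra uk => /eqP s1; rewrite Et jk s1 eqxx mul1r subrr mul0r //.
  left; exists k, ((1 - s) / c); split.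
    by rewrite mulf_neq0 ?invr_eq0 // subr_eq0 eq_sym.
  apply/rowP => t; rewrite Et hZE jk; case: (t == k); rewrite ?mulr1n ?mulr0n ?mulr1 ?mulr0 //.
  by rewrite subr0 mul0r.
- right; exists k, j, (1 / c), (- s / c); split; first by rewrite eq_sym.
  split; first by rewrite div1r invr_eq0.
  split.
    case: Hs => ->; [right; rewrite mulNr | left; rewrite opprK]; by [].
  apply/rowP => t; rewrite Et mxE !hZE.
  field; exact: c0.
Qed.
End S4.

Section S5.
Variables (R : realType) (n : nat).
Implicit Types (u v w r : 'rV[R]_n) (M A B : 'M[R]_n).
Local Notation h := (@hvec R n).

Lemma Broot_one k (a : R) : (a = 1 \/ a = -1) -> B_root (a *: h k).
Proof. by case=> ->; left; exists k; [left; rewrite scale1r | right; rewrite scaleN1r]. Qed.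

Lemma Broot_two k j (a b : R) : k != j -> (a = 1 \/ a = -1) -> (b = 1 \/ b = -1) ->
  B_root (a *: h k + b *: h j).
Proof.
wlog lt : k j a b / (k < j)%N.
  move=> W kj Ha Hb; case: (ltngtP k j) => [l|l|e].
  - exact: W.
  - by rewrite addrC; apply: W => //; rewrite eq_sym.
  - by move: kj; rewrite (val_inj e) eqxx.
move=> _ Ha Hb; right; exists k, j; split=> //.
by case: Ha => ->; case: Hb => ->; rewrite ?scale1r ?scaleN1r; auto.
Qed.

Lemma sign_neq0 (a : R) : (a = 1 \/ a = -1) -> a != 0.
Proof. by case=> ->; rewrite ?oppr_eq0 oner_eq0. Qed.

Lemma B_root_RDn r : B_root r -> RDn r.
Proof.
case=> [[i [->|->]]|[i [j [ij Hr]]]].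
- by left; exists i, 1; rewrite scale1r oner_eq0.
- by left; exists i, (-1); rewrite scaleN1r oppr_eq0 oner_eq0.
have kj : i != j by rewrite neq_ltn ij.
right; case: Hr => [->|[->|[->|->]]].
- exists i, j, 1, 1; rewrite !scale1r oner_eq0; auto.
- exists i, j, 1, (-1); rewrite scale1r scaleN1r oner_eq0; auto.
- exists i, j, (-1), 1; rewrite scale1r scaleN1r oppr_eq0 oner_eq0 opprK; auto.
- exists i, j, (-1), (-1); rewrite !scaleN1r oppr_eq0 oner_eq0; auto.
Qed.

Lemma RDnZ (c : R) u : c != 0 -> RDn u -> RDn (c *: u).
Proof.
move=> c0; case=> [[k [x [x0 ->]]]|[k [j [x [y [kj [x0 [Hy ->]]]]]]]].
  by left; exists k, (c * x); rewrite scalerA mulf_neq0.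
right; exists k, j, (c * x), (c * y); split=> //; split; first by rewrite mulf_neq0.
split; last by rewrite scalerDr !scalerA.
by case: Hy => ->; [left | right; rewrite mulrN].
Qed.

Lemma RD_RDn u : RD u -> RDn u.
Proof.
move=> [r [c [Hr [c0 ->]]]]; apply: RDnZ; first by rewrite gt_eqF.
exact: B_root_RDn.
Qed.

Lemma RDn_RD u : RDn u -> RD u.
Proof.
case=> [[k [x [x0 ->]]]|[k [j [x [y [kj [x0 [Hy ->]]]]]]]].
  case: (ltrgtP 0 x) => [xp|xn|e]; last by move: x0; rewrite -e eqxx.
    by exists (1 *: h k), x; split; [apply: Broot_one; left | rewrite scale1r].
  exists ((-1) *: h k), (- x); split; first by apply: Broot_one; right.
  by rewrite oppr_gt0 scalerA mulrN1 opprK.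
case: (ltrgtP 0 x) => [xp|xn|e]; last by move: x0; rewrite -e eqxx.
  exists (1 *: h k + (y / x) *: h j), x; split.
    apply: Broot_two => //; first by left.
    by case: Hy => ->; [left; rewrite divff | right; rewrite mulNr divff].
  by split=> //; rewrite scalerDr !scalerA mulr1 mulrCA divff // mulr1.
exists ((-1) *: h k + (- y / x) *: h j), (- x); split.
  apply: Broot_two => //; first by right.
  by case: Hy => ->; [right; rewrite mulNr divff | left; rewrite opprK divff].
split; first by rewrite oppr_gt0.
rewrite scalerDr !scalerA. congr (_ *: _ + _ *: _). ring. field; exact: x0.
Qed.
End S5.

Section S6.
Variables (R : realType) (n : nat).
Implicit Types (u v w r : 'rV[R]_n) (M A B : 'M[R]_n).
Local Notation h := (@hvec R n).

Lemma weyl_sp M : weylB M -> sp M.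
Proof.
elim=> [|w s _ Hw [r [Hr ->]]|w _ Hw]; first exact: sp1.
- exact: sp_mul Hw (sp_refl (B_root_RDn Hr)).
- by rewrite sp_inv //; apply: sp_tr.
Qed.

Lemma refl_fix u r : dotv u r = 0 -> u *m refl r = u.
Proof. by move=> H; rewrite refl_apply H mulr0 scale0r subr0. Qed.

Lemma refl_swap u v : dotv u u = 1 -> dotv v v = 1 -> u != v -> u *m refl (u - v) = v.
Proof.
move=> Hu Hv uv.
have d0 : dotv (u - v) (u - v) != 0 by apply: contra uv => /eqP /dot_eq0 /eqP; rewrite subr_eq0.
rewrite refl_apply; move: d0.
rewrite !(dotBl, dotBr) Hu Hv (dotC v u) => d0.
have -> : 2 / (1 - dotv u v - (dotv u v - 1)) * (1 - dotv u v) = 1 by field.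
by rewrite scale1r opprB addrC subrK.
Qed.

Definition fixset M := [set i | h i *m M == h i].

Lemma fix_all M : fixset M = setT -> M = 1%:M.
Proof.
move=> Hf; apply: mx_ext => i; rewrite mulmx1.
have : i \in fixset M by rewrite Hf inE.
by rewrite inE => /eqP.
Qed.

Lemma sp_weyl M : sp M -> weylB M.
Proof.
move=> HM; move: {2}(n - #|fixset M|)%N (leqnn (n - #|fixset M|)) => m.
elim: m M HM => [|m IH] M HM Hm; case: (eqVneq (fixset M) setT) => [Hf|nf];
  try by rewrite (fix_all Hf); exact: gen_one.
  move: nf; rewrite eqEcard subsetT cardsT card_ord /=.
  by move: Hm; rewrite leqn0 subn_eq0 => ->.
have [k kf] : exists k, k \notin fixset M.
  apply/existsP; apply: contraT => /existsPn H; rewrite -(negPf nf); apply/eqP.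
  by apply/setP => i; rewrite !inE; have := H i; rewrite negbK inE => ->.
have [HMo RM] := HM.
have [j [s [Hs Ek]]] := RM k.
have hk1 : dotv (h k) (h k) = 1 by rewrite dothh eqxx.
have fk i : i \in fixset M -> i != k.
  by move=> Hi; apply: contraNneq kf => <-.
have [r [Hr [Hrk Hri]]] : exists r, RDn r /\ (h k *m M *m refl r = h k) /\
    (forall i, i \in fixset M -> h i *m M *m refl r = h i).
  case: (eqVneq j k) => [jk|jk].
  - have sm1 : s = -1.
      case: Hs => // s1; move: kf; by rewrite inE Ek s1 jk scale1r eqxx.
    exists (h k); split; first by left; exists k, 1; rewrite scale1r oner_eq0.
    split.
      rewrite Ek sm1 jk refl_apply hk1 dotZl hk1 scaleN1r.
      by apply/rowP => t; rewrite !mxE; lra.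
    move=> i Hi; rewrite inE in Hi; rewrite (eqP Hi) refl_fix //.
    by rewrite dothh (negPf (fk i _)) // inE.
  - have s0 : s != 0 by apply: sign_neq0.
    exists (s *: h j - h k); split.
      rewrite -scaleN1r; apply: B_root_RDn; apply: Broot_two => //; by right.
    split.
      rewrite Ek refl_swap //.
      - by rewrite dotZl dotZr dothh eqxx mulr1n mulr1; case: Hs => ->; lra.
      - apply: contra jk => /eqP /rowP /(_ j); rewrite hZE hE eqxx mulr1 => E.
        by move: E s0; case: (j == k) => // ->; rewrite eqxx.
    move=> i Hi; have ik := fk i Hi; rewrite inE in Hi; rewrite (eqP Hi) refl_fix //.
    have ij : i != j.
      apply/eqP => eij; have := dotM (h i) (h k) HMo.
      rewrite (eqP Hi) Ek dothh (negPf ik) eij dotZr dothh eqxx mulr1n mulr1 mulr0n.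
      by move/eqP; rewrite (negPf s0).
    by rewrite dotBr dotZr !dothh (negPf ij) (negPf ik) mulr0n mulr0 subr0.
set M' := M *m refl r.
have HM' : sp M' by apply: sp_mul HM (sp_refl Hr).
have Hprop : fixset M \proper fixset M'.
  apply/properP; split.
    by apply/subsetP => i Hi; rewrite inE /M' mulmxA Hri.
  by exists k; rewrite // inE /M' mulmxA Hrk.
have Hc := proper_card Hprop.
have Hcard : (#|fixset M'| <= n)%N by have := max_card (mem (fixset M')); rewrite card_ord.
have W' : weylB M' by apply: IH => //; lia.
have -> : M = M' *m refl r.
  by apply: mx_ext => i; rewrite /M' !mulmxA refl_invol // RDn_neq0.
apply: gen_mul W' _.
have [r' [c [Hr' [c0 Er]]]] := RDn_RD Hr.
by exists r'; split=> //; rewrite Er reflZ // gt_eqF.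
Qed.
End S6.



Section D1.
Variables (R : realType) (n : nat).
Implicit Types (u v w r : 'rV[R]_n) (M A B : 'M[R]_n).
Local Notation h := (@hvec R n).

Lemma orth_neq0 u A : orthogonal_mx A -> u != 0 -> u *m A != 0.
Proof.
move=> HA u0; apply: contra u0 => /eqP E.
by rewrite -[u]mulmx1 -HA mulmxA E mul0mx.
Qed.

Lemma weyl_refl r : B_root r -> weylB (refl r).
Proof.
move=> Hr; rewrite -[refl r]mul1mx; apply: gen_mul; first exact: gen_one.
by exists r.
Qed.

Lemma rg_refl (f : 'I_n -> 'rV[R]_n) i : refl_group f (refl (f i)).
Proof.
rewrite -[refl _]mul1mx; apply: gen_mul; first exact: gen_one.
by exists i.
Qed.

Lemma conj_mul A B S : orthogonal_mx S ->
  S^T *m (A *m B) *m S = (S^T *m A *m S) *m (S^T *m B *m S).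
Proof. by move=> HS; rewrite !mulmxA -(mulmxA _ S) HS mulmx1. Qed.

Lemma rg_sp (f : 'I_n -> 'rV[R]_n) g M :
  embedding f g -> refl_group f M -> sp (g^T *m M *m g).
Proof.
move=> [Hg Hf]; elim=> [|w s _ Hw [i ->]|w _ Hw].
- by rewrite mulmx1 orthC //; exact: sp1.
- rewrite conj_mul // refl_conj //; apply: sp_mul Hw _.
  apply: sp_refl; apply: RD_RDn; have [r [Hr [c [c0 E]]]] := Hf i.
  by exists r, c.
- have Hwo : orthogonal_mx w.
    have -> : w = g *m (g^T *m w *m g) *m g^T.
      by rewrite !mulmxA Hg mul1mx -mulmxA Hg mulmx1.
    apply: orth_mul; [apply: orth_mul => // | exact: orth_tr].
    by case: Hw.
  rewrite orth_inv //.
  have -> : g^T *m w^T *m g = (g^T *m w *m g)^T by rewrite !trmx_mul trmxK mulmxA.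
  exact: sp_tr.
Qed.

Lemma norm_roots (f : 'I_n -> 'rV[R]_n) hh g :
  orthogonal_mx hh -> (forall M, refl_group f M <-> weylB (hh^T *m M *m hh)) ->
  embedding f g -> forall r, B_root r -> RDn (r *m (hh^T *m g)).
Proof.
move=> Hh Hiff Hg r Hr.
have Hgo : orthogonal_mx g by case: Hg.
have Hso : orthogonal_mx (hh^T *m g) by apply: orth_mul => //; exact: orth_tr.
have RG : refl_group f (hh *m refl r *m hh^T).
  apply/Hiff; rewrite !mulmxA (orthC Hh) mul1mx -mulmxA (orthC Hh) mulmx1.
  exact: weyl_refl.
have := rg_sp Hg RG.
have -> : g^T *m (hh *m refl r *m hh^T) *m g = (hh^T *m g)^T *m refl r *m (hh^T *m g).
  by rewrite trmx_mul trmxK !mulmxA.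
rewrite refl_conj // => Hs. refine (sp_refl_RDn Hs _).
by apply: orth_neq0 => //; apply: RDn_neq0; apply: B_root_RDn.
Qed.

Lemma exist_emb (f : 'I_n -> 'rV[R]_n) hh :
  simplex_family f -> orthogonal_mx hh ->
  (forall M, refl_group f M <-> weylB (hh^T *m M *m hh)) ->
  embedding f hh /\ (forall i, RDn (f i *m hh)).
Proof.
move=> [Hu _] Hh Hiff.
have H i : RDn (f i *m hh).
  have := rg_refl f i; rewrite Hiff => /weyl_sp; rewrite refl_conj // => Hs.
  refine (sp_refl_RDn Hs _); apply: orth_neq0 => //.
  by apply/eqP => E; move: (Hu i); rewrite E /dotv mul0mx mxE => /eqP; rewrite eq_sym oner_eq0.
split=> //; split=> // i; have [r [c [Hr [c0 E]]]] := RDn_RD (H i).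
by exists r; split=> //; exists c.
Qed.
End D1.

Section D2.
Variables (R : realType) (n : nat).
Implicit Types (u v w r : 'rV[R]_n) (M A B : 'M[R]_n).
Local Notation h := (@hvec R n).

Definition supp2 u p q := forall m, m != p -> m != q -> u 0 m = 0.

Lemma dot_supp2 u v p q : p != q -> supp2 u p q ->
  dotv u v = u 0 p * v 0 p + u 0 q * v 0 q.
Proof.
move=> pq Hu; rewrite dotE (bigD1 p) // (bigD1 q) /=; last by rewrite eq_sym.
rewrite big1 ?addr0 // => m /andP [mp mq]; by rewrite Hu ?mul0r.
Qed.

Lemma double_entry k j (x y : R) m :
  (x *: h k + y *: h j) 0 m = x * (m == k)%:R + y * (m == j)%:R.
Proof. by rewrite mxE !hZE. Qed.

Lemma supp_RDn v : RDn v -> exists s t, forall m, v 0 m != 0 -> m = s \/ m = t.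
Proof.
case=> [[k [x [_ ->]]]|[k [j [x [y [_ [_ [_ ->]]]]]]]].
  exists k, k => m; rewrite hZE; case: (eqVneq m k) => [->|_]; first by left.
  by rewrite mulr0n mulr0 eqxx.
exists k, j => m; rewrite double_entry.
case: (eqVneq m k) => [->|_]; first by left.
case: (eqVneq m j) => [->|_]; first by right.
by rewrite !mulr0n !mulr0 addr0 eqxx.
Qed.

Lemma RDn_three v m1 m2 m3 : RDn v -> m1 != m2 -> m1 != m3 -> m2 != m3 ->
  v 0 m1 != 0 -> v 0 m2 != 0 -> v 0 m3 != 0 -> False.
Proof.
move=> /supp_RDn [s [t Hst]] n12 n13 n23 /Hst H1 /Hst H2 /Hst H3.
case: H1 => E1; case: H2 => E2; case: H3 => E3; subst;
  by rewrite ?eqxx in n12 n13 n23.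
Qed.

Lemma three_distinct k : (3 <= n)%N -> exists l l' : 'I_n, [/\ l != k, l' != k & l != l'].
Proof.
move=> Hn.
have h0 : (0 < n)%N by lia. have h1 : (1 < n)%N by lia. have h2 : (2 < n)%N by lia.
set o0 := Ordinal h0; set o1 := Ordinal h1; set o2 := Ordinal h2.
have n01 : o0 != o1 by []. have n02 : o0 != o2 by []. have n12 : o1 != o2 by [].
case: (eqVneq k o0) => [->|k0].
  by exists o1, o2.
case: (eqVneq k o1) => [->|k1].
  by exists o0, o2.
by exists o0, o1; split; rewrite // eq_sym.
Qed.

Lemma unit_single u : dotv u u = 1 -> single u -> exists t (s : R), (s = 1 \/ s = -1) /\ u = s *: h t.
Proof.
move=> Hu [t [x [x0 E]]]; exists t, x; split=> //.
move: Hu; rewrite E dotZl dotZr dothh eqxx mulr1n mulr1 => /eqP.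
by rewrite -expr2 sqrf_eq1 => /orP [] /eqP; auto.
Qed.

Lemma plane_contra (x y bp bq cp cq : R) :
  x * bp + y * bq = 0 -> x * cp + y * cq = 0 -> bp * cp + bq * cq = 0 ->
  bp ^+ 2 + bq ^+ 2 = 1 -> cp ^+ 2 + cq ^+ 2 = 1 -> x ^+ 2 + y ^+ 2 = 1 -> False.
Proof.
move=> E1 E2 E3 N1 N2 N3.
have D1 : (x * bq - y * bp) ^+ 2 = 1.
  have : (x * bp + y * bq) ^+ 2 + (x * bq - y * bp) ^+ 2 = (x ^+ 2 + y ^+ 2) * (bp ^+ 2 + bq ^+ 2) by ring.
  by rewrite E1 N1 N3 expr0n /= add0r mul1r.
have D2 : (x * cq - y * cp) ^+ 2 = 1.
  have : (x * cp + y * cq) ^+ 2 + (x * cq - y * cp) ^+ 2 = (x ^+ 2 + y ^+ 2) * (cp ^+ 2 + cq ^+ 2) by ring.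
  by rewrite E2 N2 N3 expr0n /= add0r mul1r.
have D3 : (x * bq - y * bp) * (x * cq - y * cp) = 0.
  have : (x ^+ 2 + y ^+ 2) * (bp * cp + bq * cq) = (x * bp + y * bq) * (x * cp + y * cq) + (x * bq - y * bp) * (x * cq - y * cp) by ring.
  by rewrite E1 E3 mulr0 mul0r add0r => <-.
have : ((x * bq - y * bp) * (x * cq - y * cp)) ^+ 2 = 1 by rewrite exprMn D1 D2 mulr1.
by rewrite D3 expr0n /= => /eqP; rewrite eq_sym oner_eq0.
Qed.
End D2.

Section D3.
Variables (R : realType) (n : nat).
Implicit Types (u v w r : 'rV[R]_n) (M A B : 'M[R]_n).
Local Notation h := (@hvec R n).

Lemma norm3 tau : (3 <= n)%N -> orthogonal_mx tau ->
  (forall r, B_root r -> RDn (r *m tau)) -> sp tau.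
Proof.
move=> Hn Ht Hr; split=> // k.
have Hroot1 i : RDn (h i *m tau).
  by apply: Hr; rewrite -[h i]scale1r; apply: Broot_one; left.
have Hunit i : dotv (h i *m tau) (h i *m tau) = 1 by rewrite dotM // dothh eqxx.
have Hdot i j : i != j -> dotv (h i *m tau) (h j *m tau) = 0.
  by move=> ij; rewrite dotM // dothh (negPf ij).
have Hsum i j : i != j -> RDn (h i *m tau + h j *m tau).
  move=> ij; rewrite -mulmxDl; apply: Hr; rewrite -[h i]scale1r -[h j]scale1r.
  by apply: Broot_two => //; left.
case: (Hroot1 k) => [Hs|[p [q [x [y [pq [x0 [Hy Ea]]]]]]]].
  by have [t [s [Hs' E]]] := unit_single (Hunit k) Hs; exists t, s.
exfalso.
have [l [l' [lk l'k ll']]] := three_distinct k Hn.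
set a := h k *m tau in Ea.
have y0 : y != 0 by case: Hy => ->; rewrite ?oppr_eq0.
have ap : a 0 p = x by rewrite Ea double_entry eqxx (negPf pq) mulr1n mulr0n mulr1 mulr0 addr0.
have aq : a 0 q = y by rewrite Ea double_entry eqxx eq_sym (negPf pq) mulr1n mulr0n mulr1 mulr0 add0r.
have sa : supp2 a p q.
  by move=> m mp mq; rewrite Ea double_entry (negPf mp) (negPf mq) !mulr0n !mulr0 addr0.
have Hb l0 : l0 != k -> supp2 (h l0 *m tau) p q.
  move=> l0k m mp mq; set b := h l0 *m tau.
  have Hab : dotv a b = 0 by apply: Hdot; rewrite eq_sym.
  have Hs : RDn (a + b) by apply: Hsum; rewrite eq_sym.
  rewrite (dot_supp2 _ pq sa) ap aq in Hab.
  apply/eqP; apply: contraT => bm.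
  have abE t : (a + b) 0 t = a 0 t + b 0 t by rewrite mxE.
  case: (eqVneq (b 0 p) 0) => bp; case: (eqVneq (b 0 q) 0) => bq.
  - exfalso; apply: (RDn_three (m1 := p) (m2 := q) (m3 := m) Hs pq).
    + by rewrite eq_sym.
    + by rewrite eq_sym.
    + by rewrite abE ap bp addr0.
    + by rewrite abE aq bq addr0.
    + by rewrite abE sa // add0r.
  - by move: Hab; rewrite bp mulr0 add0r => /eqP; rewrite mulf_eq0 (negPf y0) (negPf bq).
  - by move: Hab; rewrite bq mulr0 addr0 => /eqP; rewrite mulf_eq0 (negPf x0) (negPf bp).
  - by exfalso; apply: (RDn_three (m1 := p) (m2 := q) (m3 := m) (Hroot1 l0) pq); rewrite // eq_sym.
have Hlk : l != k := lk. have Hl'k : l' != k := l'k.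
have sb := Hb l lk; have sc := Hb l' l'k.
set b := h l *m tau in sb; set c := h l' *m tau in sc.
apply: (@plane_contra R x y (b 0 p) (b 0 q) (c 0 p) (c 0 q)).
- by rewrite -ap -aq -(dot_supp2 _ pq sa); apply: Hdot; rewrite eq_sym.
- by rewrite -ap -aq -(dot_supp2 _ pq sa); apply: Hdot; rewrite eq_sym.
- by rewrite -(dot_supp2 _ pq sb); apply: Hdot.
- by rewrite !expr2 -(dot_supp2 _ pq sb); apply: Hunit.
- by rewrite !expr2 -(dot_supp2 _ pq sc); apply: Hunit.
- by rewrite -ap -aq !expr2 -(dot_supp2 _ pq sa); apply: Hunit.
Qed.
End D3.



Section E1.
Variables (R : realType) (n : nat).
Implicit Types (u v w r : 'rV[R]_n) (M A B : 'M[R]_n).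
Local Notation h := (@hvec R n).

Lemma refl_entry u i j : refl u i j = (j == i)%:R - 2 / dotv u u * u 0 i * u 0 j.
Proof. by rewrite -refl_row_entry hvecM_entry. Qed.

Lemma rg_inv (f : 'I_n -> 'rV[R]_n) hh (Q : 'M[R]_n -> Prop) :
  Q 1%:M -> (forall A B, Q A -> Q B -> Q (A *m B)) -> (forall A, Q A -> Q A^T) ->
  (forall i, Q (refl (f i *m hh))) -> (forall i, f i != 0) -> orthogonal_mx hh ->
  forall M, refl_group f M -> Q (hh^T *m M *m hh) /\ orthogonal_mx (hh^T *m M *m hh).
Proof.
move=> Q1 QM QT Qr f0 Hh M; elim=> [|w s _ [Qw Ow] [i ->]|w _ [Qw Ow]].
- by rewrite mulmx1 orthC //; split=> //; exact: orth1.
- rewrite conj_mul // refl_conj //; split; first exact: QM.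
  by apply: orth_mul => //; apply: refl_orth; apply: orth_neq0.
- have Hwo : orthogonal_mx w.
    have -> : w = hh *m (hh^T *m w *m hh) *m hh^T.
      by rewrite !mulmxA Hh mul1mx -mulmxA Hh mulmx1.
    by apply: orth_mul; [apply: orth_mul => // | exact: orth_tr].
  rewrite orth_inv //.
  have -> : hh^T *m w^T *m hh = (hh^T *m w *m hh)^T by rewrite !trmx_mul trmxK mulmxA.
  by split; [exact: QT | exact: orth_tr].
Qed.

Definition diagQ M := forall i j, i != j -> M i j = 0.

Lemma diagQ1 : diagQ 1%:M.
Proof. by move=> i j ij; rewrite mxE (negPf ij). Qed.

Lemma diagQM A B : diagQ A -> diagQ B -> diagQ (A *m B).
Proof.
move=> HA HB i j ij; rewrite mxE big1 // => k _.
case: (eqVneq i k) => [<-|ik]; first by rewrite HB // mulr0.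
by rewrite HA // mul0r.
Qed.

Lemma diagQT A : diagQ A -> diagQ A^T.
Proof. by move=> HA i j ij; rewrite mxE HA // eq_sym. Qed.

Lemma diagQ_refl u : single u -> diagQ (refl u).
Proof.
move=> [k [x [_ ->]]] i j ij; have ji : j != i by rewrite eq_sym.
rewrite refl_entry !hZE (negPf ji) mulr0n sub0r.
case: (eqVneq i k) => [ik|ik]; last by rewrite mulr0n !(mulr0, mul0r, oppr0).
case: (eqVneq j k) => [jk|jk]; first by move: ij; rewrite ik jk eqxx.
by rewrite mulr0n !(mulr0, mul0r, oppr0).
Qed.
End E1.

Section E2.
Variables (R : realType) (n : nat).
Implicit Types (u v w r : 'rV[R]_n) (M A B : 'M[R]_n).
Local Notation h := (@hvec R n).

Lemma two_elems (p q m : 'I_n) : n = 2%N -> p != q -> m = p \/ m = q.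
Proof.
move=> n2; case: m p q => [m Hm] [p Hp] [q Hq] pq.
move: pq; rewrite -val_eqE /= => /eqP pq.
case: (eqVneq m p) => [E|/eqP mp]; first by left; apply: val_inj.
by right; apply: val_inj => /=; lia.
Qed.

Lemma sum2 (p q : 'I_n) (F : 'I_n -> R) : n = 2%N -> p != q -> \sum_t F t = F p + F q.
Proof.
move=> n2 pq; rewrite (bigD1 p) // (bigD1 q) /=; last by rewrite eq_sym.
rewrite big1 ?addr0 // => m /andP [mp mq].
by case: (two_elems m n2 pq) => E; rewrite E eqxx in mp mq.
Qed.

Definition symQ (p q : 'I_n) M := M p p = M q q /\ M p q = M q p.

Lemma symQ1 p q : p != q -> symQ p q 1%:M.
Proof. by move=> pq; rewrite /symQ !mxE !eqxx (negPf pq) eq_sym (negPf pq). Qed.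

Lemma symQM p q A B : n = 2%N -> p != q -> symQ p q A -> symQ p q B -> symQ p q (A *m B).
Proof.
move=> n2 pq [A1 A2] [B1 B2]; rewrite /symQ !mxE !(sum2 _ n2 pq).
rewrite A1 A2 B1 B2; split; ring.
Qed.

Lemma symQT p q A : symQ p q A -> symQ p q A^T.
Proof. by move=> [A1 A2]; rewrite /symQ !mxE. Qed.

Lemma symQ_refl p q u : (u 0 p) ^+ 2 = (u 0 q) ^+ 2 -> symQ p q (refl u).
Proof.
move=> E; rewrite /symQ !refl_entry !eqxx; split.
  by rewrite -!mulrA -!expr2 E.
by rewrite !(eq_sym q p) mulrAC.
Qed.

Lemma double_sq2 v (m m' : 'I_n) : n = 2%N -> rdouble v -> (v 0 m) ^+ 2 = (v 0 m') ^+ 2.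
Proof.
move=> n2 [k [j [x [y [kj [_ [Hy ->]]]]]]].
have Hk : (x *: h k + y *: h j) 0 k = x.
  by rewrite double_entry eqxx (negPf kj) mulr1n mulr0n mulr1 mulr0 addr0.
have Hj : (x *: h k + y *: h j) 0 j = y.
  by rewrite double_entry eqxx eq_sym (negPf kj) mulr1n mulr0n mulr1 mulr0 add0r.
have Ey : y ^+ 2 = x ^+ 2 by case: Hy => ->; rewrite ?sqrrN.
by case: (two_elems m n2 kj) => ->; case: (two_elems m' n2 kj) => ->;
  rewrite ?Hk ?Hj ?Ey.
Qed.
End E2.

Section E3.
Variables (R : realType) (n : nat).
Implicit Types (u v w r : 'rV[R]_n) (M A B : 'M[R]_n).
Local Notation h := (@hvec R n).

Lemma dich2 tau m : n = 2%N -> orthogonal_mx tau ->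
  (forall r, B_root r -> RDn (r *m tau)) -> single (h m *m tau) -> sp tau.
Proof.
move=> n2 Ht Hr Hm; split=> // k.
have Hunit i : dotv (h i *m tau) (h i *m tau) = 1 by rewrite dotM // dothh eqxx.
have [t [s [Hs Et]]] := unit_single (Hunit m) Hm.
case: (eqVneq k m) => [->|km]; first by exists t, s.
have Hk : RDn (h k *m tau) by apply: Hr; rewrite -[h k]scale1r; apply: Broot_one; left.
case: Hk => [Hk|[p [q [x [y [pq [x0 [Hy Ek]]]]]]]].
  by have [t' [s' [Hs' E]]] := unit_single (Hunit k) Hk; exists t', s'.
exfalso.
have y0 : y != 0 by case: Hy => ->; rewrite ?oppr_eq0.
have s0 := sign_neq0 Hs.
have := dotM (h k) (h m) Ht; rewrite dothh (negPf km) Et Ek dotZr doth double_entry mulr0n.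
move/eqP; rewrite mulf_eq0 (negPf s0) /=.
case: (two_elems t n2 pq) => ->.
  by rewrite eqxx (negPf pq) mulr1n mulr0n mulr1 mulr0 addr0 (negPf x0).
by rewrite eqxx (eq_sym q p) (negPf pq) mulr1n mulr0n mulr1 mulr0 add0r (negPf y0).
Qed.

Lemma mixed2 (f : 'I_n -> 'rV[R]_n) hh : n = 2%N -> orthogonal_mx hh ->
  (forall M, refl_group f M <-> weylB (hh^T *m M *m hh)) ->
  (forall i, f i != 0) -> (forall i, RDn (f i *m hh)) ->
  exists i j, [/\ i != j, single (f i *m hh) & rdouble (f j *m hh)].
Proof.
move=> n2 Hh Hiff f0 Hu.
have h0 : (0 < n)%N by lia. have h1 : (1 < n)%N by lia.
set i0 : 'I_n := Ordinal h0; set i1 : 'I_n := Ordinal h1.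
have i01 : i0 != i1 by [].
have inW X : weylB X -> refl_group f (hh *m X *m hh^T).
  by move=> HX; apply/Hiff; rewrite !mulmxA (orthC Hh) mul1mx -mulmxA (orthC Hh) mulmx1.
have Hconj X : weylB X -> hh^T *m (hh *m X *m hh^T) *m hh = X.
  by move=> _; rewrite !mulmxA (orthC Hh) mul1mx -mulmxA (orthC Hh) mulmx1.
have hr1 : RDn (h i0 - h i1).
  by apply: B_root_RDn; rewrite -scaleN1r -[h i0]scale1r; apply: Broot_two => //; auto.
case: (Hu i0) => [S0|D0]; case: (Hu i1) => [S1|D1].
- exfalso.
  have Sall i : single (f i *m hh) by case: (two_elems i n2 i01) => ->.
  set X := refl (h i0 - h i1).
  have WX : weylB X by apply: sp_weyl; apply: sp_refl.
  have [QX _] := rg_inv (@diagQ1 R n) (@diagQM R n) (@diagQT R n)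
     (fun i => diagQ_refl (Sall i)) f0 Hh (inW X WX).
  rewrite Hconj // in QX.
  have := QX i0 i1 i01; rewrite /X refl_entry.
  have -> : dotv (h i0 - h i1) (h i0 - h i1) = 2.
    rewrite !(dotBl, dotBr, dothh) !eqxx (negPf i01) (eq_sym i1 i0) (negPf i01).
    by rewrite !(mulr1n, mulr0n); lra.
  rewrite !mxE !eqxx /= divff ?(@pnatr_eq0 R 2) // .
  by rewrite !(subr0, sub0r, mul1r, opprK) => /eqP; rewrite oner_eq0.
- by exists i0, i1.
- by exists i1, i0; rewrite eq_sym.
- exfalso.
  have Dall i : rdouble (f i *m hh) by case: (two_elems i n2 i01) => ->.
  set X := refl (h i0).
  have WX : weylB X by apply: weyl_refl; rewrite -[h i0]scale1r; apply: Broot_one; left.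
  have [QX _] := rg_inv (@symQ1 R n i0 i1 i01) (fun A B => @symQM R n i0 i1 A B n2 i01) (@symQT R n i0 i1)
     (fun i => symQ_refl (double_sq2 i0 i1 n2 (Dall i))) f0 Hh (inW X WX).
  rewrite Hconj // in QX.
  case: QX => Q1 _; move: Q1; rewrite /X !refl_entry dothh !mxE !eqxx /=. rewrite divr1 !(mulr1, mulr0, subr0) => /eqP E.
  have : (1 : R) < 0 by lra.
  by rewrite ltr10.
Qed.
End E3.



Section F1.
Variables (R : realType) (n : nat).
Implicit Types (u v w r : 'rV[R]_n) (M A B : 'M[R]_n).
Local Notation h := (@hvec R n).

Lemma normals_perm (f : 'I_n -> 'rV[R]_n) G1 G2 (pi : 'I_n -> 'I_n) :
  (forall i, f i *m G1 = f (pi i) *m G2) -> (forall i, pi (pi i) = i) ->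
  forall v, normals f G1 v <-> normals f G2 v.
Proof.
move=> E P v; split=> [[i [->|->]]|[i [->|->]]]; rewrite ?E.
- by exists (pi i); left.
- by exists (pi i); right.
- by exists (pi i); left; rewrite E P.
- by exists (pi i); right; rewrite E P.
Qed.

Lemma single_double u : single u -> rdouble u -> False.
Proof.
move=> [t [x [x0 Et]]] [k [j [y [y' [kj [y0 [Hy Ed]]]]]]].
have y'0 : y' != 0 by case: Hy => ->; rewrite ?oppr_eq0.
have ek : u 0 k != 0.
  by rewrite Ed double_entry eqxx (negPf kj) mulr1n mulr0n mulr1 mulr0 addr0.
have ej : u 0 j != 0.
  by rewrite Ed double_entry eqxx (eq_sym j k) (negPf kj) mulr1n mulr0n mulr1 mulr0 add0r.
move: ek ej; rewrite Et !hZE.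
case: (eqVneq k t) => [kt|_]; last by rewrite mulr0n mulr0 eqxx.
case: (eqVneq j t) => [jt|_]; last by rewrite mulr0n mulr0 eqxx.
by move: kj; rewrite jt kt eqxx.
Qed.

Lemma alg_zero (A B C D y y' : R) : A ^+ 2 = B ^+ 2 -> C ^+ 2 = D ^+ 2 ->
  A ^+ 2 + B ^+ 2 = 1 -> C ^+ 2 + D ^+ 2 = 1 -> A * C + B * D = 0 -> y' ^+ 2 = y ^+ 2 ->
  (y * A + y' * C) * (y * B + y' * D) = 0.
Proof.
move=> AB CD NA NC O Y.
have AC : A ^+ 2 = C ^+ 2 by lra.
have BD : B * D = - (A * C) by lra.
have E1 : (A * B + C * D) ^+ 2 = 0.
  have -> : (A * B + C * D) ^+ 2 = A ^+ 2 * B ^+ 2 + C ^+ 2 * D ^+ 2 + 2 * (A * C) * (B * D) by ring.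
  rewrite BD -AB -CD -AC.
  have -> : A ^+ 2 * A ^+ 2 + A ^+ 2 * A ^+ 2 + 2 * (A * C) * - (A * C) = 2 * (A ^+ 2 * A ^+ 2 - A ^+ 2 * C ^+ 2) by ring.
  by rewrite -AC subrr mulr0.
have E2 : (A * D + B * C) ^+ 2 = 0.
  have -> : (A * D + B * C) ^+ 2 = A ^+ 2 * D ^+ 2 + B ^+ 2 * C ^+ 2 + 2 * (A * C) * (B * D) by ring.
  rewrite BD -AB -CD.
  have -> : A ^+ 2 * C ^+ 2 + A ^+ 2 * C ^+ 2 + 2 * (A * C) * - (A * C) = 0 by ring.
  by [].
move/eqP: E1; rewrite sqrf_eq0 => /eqP E1.
move/eqP: E2; rewrite sqrf_eq0 => /eqP E2.
have -> : (y * A + y' * C) * (y * B + y' * D) = y ^+ 2 * (A * B) + y' ^+ 2 * (C * D) + y * y' * (A * D + B * C) by ring.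
by rewrite Y E2 mulr0 addr0 -mulrDr E1 mulr0.
Qed.
Lemma vec2 v (k j : 'I_n) : n = 2%N -> k != j -> v 0 k = 0 -> v = v 0 j *: h j.
Proof.
move=> n2 kj vk; apply/rowP => m; rewrite hZE.
case: (two_elems m n2 kj) => ->; last by rewrite eqxx mulr1.
by rewrite vk (negPf kj) mulr0.
Qed.

Lemma sq_row (tau : 'M[R]_n) (k j : 'I_n) i : n = 2%N -> k != j -> orthogonal_mx tau ->
  (tau i k) ^+ 2 + (tau i j) ^+ 2 = 1.
Proof.
move=> n2 kj Ht; have := dotM (h i) (h i) Ht; rewrite dothh eqxx mulr1n dotE (sum2 _ n2 kj).
by rewrite !hvecM_entry !expr2.
Qed.

Lemma orth_row (tau : 'M[R]_n) (k j : 'I_n) i i' : n = 2%N -> k != j -> orthogonal_mx tau ->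
  i != i' -> tau i k * tau i' k + tau i j * tau i' j = 0.
Proof.
move=> n2 kj Ht ii'; have := dotM (h i) (h i') Ht; rewrite dothh (negPf ii') mulr0n dotE (sum2 _ n2 kj).
by rewrite !hvecM_entry.
Qed.
Lemma row_double_mul (sg : 'M[R]_n) (k j m' : 'I_n) (y y' : R) : n = 2%N -> k != j ->
  ((y *: h k + y' *: h j) *m sg) 0 m' = y * sg k m' + y' * sg j m'.
Proof.
move=> n2 kj; rewrite mulmxDl -!scalemxAl mxE [(_ *: (h j *m _)) 0 m']mxE mxE.
by rewrite !hvecM_entry.
Qed.
End F1.

Theorem corollary2 (R : realType) (n : nat) (f : 'I_n -> 'rV[R]_n) :
  (2 <= n)%N ->
  simplex_family f ->
  generates_Bn f ->
  exists g : 'M[R]_n, embedding f g /\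
    forall g' : 'M[R]_n, embedding f g' -> same_embedding f g g'.
Proof.
move=> n2 Hf [hh [Hh Hiff]].
have [Emb Hu] := exist_emb Hf Hh Hiff.
exists hh; split=> // g' Hg'.
have Hg'o : orthogonal_mx g' by case: Hg'.
set sigma := hh^T *m g'.
have Hso : orthogonal_mx sigma by apply: orth_mul => //; exact: orth_tr.
have Hhs : hh *m sigma = g' by rewrite /sigma mulmxA Hh mul1mx.
have Nr := norm_roots Hh Hiff Hg'.
have easy : sp sigma -> same_embedding f hh g'.
  by move=> Hs; exists sigma; split; [exact: sp_weyl | move=> v; rewrite Hhs].
case: (leqP 3 n) => [n3|n3]; first exact: easy (norm3 n3 Hso Nr).
have n2' : n = 2%N by lia.
have h0 : (0 < n)%N by lia. have h1 : (1 < n)%N by lia.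
set i0 : 'I_n := Ordinal h0; set i1 : 'I_n := Ordinal h1.
have i01 : i0 != i1 by [].
have Hroot1 i : RDn (hvec R i *m sigma).
  by apply: Nr; rewrite -[hvec R i]scale1r; apply: Broot_one; left.
case: (Hroot1 i0) => [S0|D0]; first exact: easy (dich2 n2' Hso Nr S0).
case: (Hroot1 i1) => [S1|D1]; first exact: easy (dich2 n2' Hso Nr S1).
have Dall i : rdouble (hvec R i *m sigma) by case: (two_elems i n2' i01) => ->.
have f0 i : f i != 0.
  by apply/eqP => E; move: (proj1 Hf i); rewrite E /dotv mul0mx mxE => /eqP; rewrite eq_sym oner_eq0.
have [js [jl [Hne Ss Dl]]] := mixed2 n2' Hh Hiff f0 Hu.
set us := f js *m hh in Ss; set ul := f jl *m hh in Dl.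
have unit i : dotv (f i *m hh) (f i *m hh) = 1 by rewrite dotM // (proj1 Hf i).
have usl : us != ul by apply/eqP => E; apply: (single_double Ss); rewrite E.
set Rf := refl (us - ul).
have Rfo : orthogonal_mx Rf by apply: refl_orth; rewrite subr_eq0.
have sw1 : us *m Rf = ul by apply: refl_swap => //; apply: unit.
have sw2 : ul *m Rf = us.
  rewrite /Rf -[us - ul]opprB -scaleN1r reflZ ?oppr_eq0 ?oner_eq0 //.
  by apply: refl_swap; rewrite ?unit // eq_sym.
set g3 := hh *m Rf *m sigma.
pose pi := fun i => if i == js then jl else js.
have Hall i : i = js \/ i = jl by apply: two_elems.
have Hnel : jl != js by rewrite eq_sym.
have Pinv i : pi (pi i) = i.
  by case: (Hall i) => ->; rewrite /pi ?eqxx /= ?(negPf Hnel) ?eqxx.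
have Hsig i : f i *m hh *m sigma = f i *m g' by rewrite -mulmxA Hhs.
have Eg3 i : f i *m g3 = f (pi i) *m g'.
  rewrite /g3 2!mulmxA; case: (Hall i) => ->.
    by rewrite -/us sw1 /ul Hsig /pi eqxx.
  by rewrite -/ul sw2 /us Hsig /pi (negPf Hnel).
have Emb3 : embedding f g3.
  split; first by apply: orth_mul => //; apply: orth_mul.
  by move=> i; rewrite Eg3; exact: (proj2 Hg' (pi i)).
have Nr3 := norm_roots Hh Hiff Emb3.
have Etau : hh^T *m g3 = Rf *m sigma by rewrite /g3 !mulmxA (orthC Hh) mul1mx.
rewrite Etau in Nr3.
have Htauo : orthogonal_mx (Rf *m sigma) by apply: orth_mul.
have [t [x [Hx Et]]] := unit_single (unit js) Ss.
have [m [e [e0 Em]]] : exists m (e : R), e != 0 /\ ul *m sigma = e *: hvec R m.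
  have ul0 : ul *m sigma != 0 by apply: orth_neq0 => //; apply: double_neq0.
  case: Dl => [k [j [y [y' [kj [y0 [Hy Eul]]]]]]].
  have Ent m' : (ul *m sigma) 0 m' = y * sigma k m' + y' * sigma j m'.
    rewrite vecM_entry (sum2 _ n2' kj) Eul !double_entry eqxx (negPf kj) (eq_sym j k) (negPf kj).
    by rewrite eqxx /= !(mulr1n, mulr0n, mulr1, mulr0, addr0, add0r).
  have E1 := double_sq2 k j n2' (Dall k); rewrite !hvecM_entry in E1.
  have E2 := double_sq2 k j n2' (Dall j); rewrite !hvecM_entry in E2.
  have Ey : y' ^+ 2 = y ^+ 2 by case: Hy => ->; rewrite ?sqrrN.
  have Z := alg_zero E1 E2 (@sq_row R n sigma k j k n2' kj Hso) (@sq_row R n sigma k j j n2' kj Hso)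
    (@orth_row R n sigma k j k j n2' kj Hso kj) Ey.
  move/eqP: Z; rewrite mulf_eq0 => /orP [] /eqP Z.
  - have Ek : (ul *m sigma) 0 k = 0 by rewrite Ent.
    exists j, ((ul *m sigma) 0 j); rewrite -(vec2 n2' kj Ek); split=> //.
    by apply: contra ul0 => /eqP e0; rewrite (vec2 n2' kj Ek) e0 scale0r.
  - have Ej : (ul *m sigma) 0 j = 0 by rewrite Ent.
    have jk : j != k by rewrite eq_sym.
    exists k, ((ul *m sigma) 0 k); rewrite -(vec2 n2' jk Ej); split=> //.
    by apply: contra ul0 => /eqP e0; rewrite (vec2 n2' jk Ej) e0 scale0r.
have Hsingle : single (hvec R t *m (Rf *m sigma)).
  exists m, (x * e); split; first by rewrite mulf_neq0 // sign_neq0.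
  have -> : hvec R t = x *: us.
    by rewrite /us Et scalerA; case: Hx => ->; rewrite ?mulrNN mulr1 scale1r.
  by rewrite -(scalemxAl x us) mulmxA sw1 Em scalerA.
have Sp := dich2 n2' Htauo Nr3 Hsingle.
exists (Rf *m sigma); split; first exact: sp_weyl.
move=> v; rewrite -Etau mulmxA Hh mul1mx.
exact: (normals_perm Eg3 Pinv v).
Qed.
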